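(* Let $A\in\mathbb{R}^{m\times n}$ have singular value decomposition $A=U\Sigma V^\top$ (with $U\in\mathbb{R}^{m\times m}$, $V\in\mathbb{R}^{n\times n}$ orthogonal), let $r=\operatorname{rank}(A)$, let $\lambda:=(\sigma_1^2(A),\ldots,\sigma_r^2(A),0,\ldots,0)^\top\in\mathbb{R}^m$, let $1\le s\le r$, and let $$H_s:=\frac{U\operatorname{diag}\big(e_{s-1}(\lambda_{-1}),\ldots,e_{s-1}(\lambda_{-m})\big)U^\top}{e_s(\lambda)}.$$ Then for every $z\in\operatorname{Range}(A^\top)$, $$z^\top A^\top H_s A z\ \ge\ \frac{\sigma_{\min}^2(A)}{\sigma_s^2(A)+\cdots+\sigma_{\min}^2(A)}\,\|z\|_2^2 .$$
   Context: $\sigma_1(A)\ge\cdots\ge\sigma_r(A)=:\sigma_{\min}(A)>0$ are the nonzero singular values of $A$, so $\sigma_s^2(A)+\cdots+\sigma_{\min}^2(A)=\sum_{j=s}^r\sigma_j^2(A)$. For $\xi\in\mathbb{R}^p$ and $1\le\ell\le p$, $e_\ell(\xi):=\sum_{1\le i_1<\cdots<i_\ell\le p}\xi_{i_1}\cdots\xi_{i_\ell}$, and $e_0(\xi):=1$. For $i\in[m]$, $\lambda_{-i}\in\mathbb{R}^{m-1}$ is $\lambda$ with its $i$-th entry removed. $\operatorname{Range}(A^\top)$ is the column space of $A^\top$. *)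

(* Defs.v *)
From HB Require Import structures.
From mathcomp Require Import all_boot all_order all_algebra.
Set Implicit Arguments. Unset Strict Implicit. Unset Printing Implicit Defensive.
Import Order.TTheory GRing.Theory Num.Theory.
Local Open Scope ring_scope.

Definition esym_seq (R : comNzRingType) (l : nat) (xi : seq R) : R :=
  \sum_(S : {set 'I_(size xi)} | #|S| == l) \prod_(i in S) xi`_i.

(* xi_{-i}: xi with its i-th entry (0-based index i) removed. *)
Definition remove_entry (T : Type) (i : nat) (xi : seq T) : seq T :=
  take i xi ++ drop i.+1 xi.

(* lambda = (sigma_1^2, ..., sigma_r^2, 0, ..., 0) in R^m (0-based: sigma 0 = sigma_1). *)
Definition lambda_vec (R : nzRingType) (m r : nat) (sigma : nat -> R) : seq R :=
  [seq (if (i < r)%N then sigma i ^+ 2 else 0) | i <- iota 0 m].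

Definition svd_diag (R : nzRingType) (m n : nat) (sigma : nat -> R) : 'M[R]_(m, n) :=
  \matrix_(i < m, j < n) (if (i == j :> nat) then sigma i else 0).

Definition H_mat (R : fieldType) (m r s : nat) (sigma : nat -> R) (U : 'M[R]_m)
  : 'M[R]_m :=
  let lam := lambda_vec m r sigma in
  (esym_seq s lam)^-1 *:
    (U *m diag_mx (\row_(i < m) esym_seq s.-1 (remove_entry i lam)) *m U^T).

(* Main.v *)
Require Import Defs.
From HB Require Import structures.
From mathcomp Require Import all_boot all_order all_algebra.
From mathcomp Require Import ring lra zify.
Import Order.TTheory GRing.Theory Num.Theory.
Local Open Scope ring_scope.


Section Esym.
Variable R : realFieldType.
Implicit Types xs : seq R.

Definition Pp xs : {poly R} := \prod_(x <- xs) ('X + x%:P).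

Lemma esym_card l xs n : size xs = n ->
  esym_seq l xs = \sum_(S : {set 'I_n} | #|S| == l) \prod_(i in S) xs`_i.
Proof. by move=> <-. Qed.

Lemma esym_coef xs k : (k <= size xs)%N -> esym_seq k xs = (Pp xs)`_(size xs - k).
Proof.
move=> hk.
have e : Pp xs = \prod_(p <- map -%R xs) ('X - p%:P).
  by rewrite /Pp big_map; apply: eq_bigr => x _; rewrite polyCN opprK.
rewrite e coef_prod_XsubC; last by rewrite size_map leq_subr.
have -> : (size (map -%R xs) - (size xs - k) = k)%N by rewrite size_map subKn.
rewrite (@esym_card k xs _ (esym (size_map -%R xs))) mulr_sumr.
apply: eq_bigr => I /eqP hI.
have -> : \prod_(i in I) (map -%R xs)`_i = \prod_(i in I) - xs`_i.
  apply: eq_bigr => i _; rewrite (nth_map 0) //.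
  by have := ltn_ord i; rewrite [X in (_ < X)%N -> _]size_map.
rewrite prodrN hI mulrA -expr2 -exprM mulnC exprM sqrrN expr1n expr1n mul1r //.
Qed.

Lemma esym_big xs k : (size xs < k)%N -> esym_seq k xs = 0.
Proof.
move=> h; rewrite /esym_seq big1 // => S /eqP hS; exfalso.
have := max_card (mem S); rewrite card_ord hS; by rewrite leqNgt h.
Qed.

Lemma esym0 xs : esym_seq 0 xs = 1.
Proof.
rewrite /esym_seq (big_pred1 set0) ?big_set0 // => S.
by rewrite /= cards_eq0.
Qed.

Lemma coefPp_cons x xs j :
  (Pp (x :: xs))`_j = (if j == 0%N then 0 else (Pp xs)`_j.-1) + x * (Pp xs)`_j.
Proof. by rewrite /Pp big_cons mulrDl coefD coefXM coefCM. Qed.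

Lemma esym_cons x xs k :
  esym_seq k.+1 (x :: xs) = x * esym_seq k xs + esym_seq k.+1 xs.
Proof.
case: (ltngtP k (size xs)) => hk.
- rewrite (esym_coef _ _ (ltnW hk)) (esym_coef _ _ hk) esym_coef /=; last by rewrite ltnS ltnW.
  rewrite subSS (coefPp_cons x xs).
  have -> : (size xs - k == 0)%N = false by rewrite subn_eq0 leqNgt hk.
  by rewrite subnS addrC.
- by rewrite !esym_big //= ?mulr0 ?addr0 // ltnS ?(ltnW hk).
- subst k; rewrite (esym_big xs (size xs).+1) // esym_coef // esym_coef //=.
  by rewrite !subnn coefPp_cons /= add0r addr0.
Qed.

Lemma esym_perm xs ys k : perm_eq xs ys -> esym_seq k xs = esym_seq k ys.
Proof.
move=> p; have hs := perm_size p.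
case: (leqP k (size xs)) => h.
  by rewrite !esym_coef -?hs // /Pp (perm_big _ p).
by rewrite !esym_big -?hs.
Qed.

Lemma esym_ge0 xs k : (forall i, 0 <= xs`_i) -> 0 <= esym_seq k xs.
Proof.
move=> h; apply: sumr_ge0 => S _; apply: prodr_ge0 => i _; exact: h.
Qed.

Lemma esym_gt0 xs k : (forall i, 0 <= xs`_i) -> (forall i, (i < k)%N -> 0 < xs`_i) ->
  0 < esym_seq k xs.
Proof.
elim: xs k => [|x xs IH] [|k] h0 hp; rewrite ?esym0 ?ltr01 //.
  by have := hp 0%N (ltn0Sn _); rewrite nth_nil ltxx.
rewrite esym_cons.
have hx : 0 < x by exact: (hp 0%N (ltn0Sn _)).
have h1 : 0 < esym_seq k xs.
  apply: IH => [i|i hi]; [exact: (h0 i.+1)| exact: (hp i.+1)].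
have h2 : 0 <= esym_seq k.+1 xs by apply: esym_ge0 => i; exact: (h0 i.+1).
have := mulr_gt0 hx h1; lra.
Qed.

Lemma esym_tail xs k : (forall i, 0 <= xs`_i) ->
  esym_seq k.+1 xs <= esym_seq k xs * \sum_(k <= i < size xs) xs`_i.
Proof.
elim: xs k => [|x xs IH] k h0.
  by rewrite esym_big //= big_geq // mulr0.
have h0' : forall i, 0 <= xs`_i by move=> i; exact: (h0 i.+1).
have hx : 0 <= x by exact: (h0 0%N).
case: k => [|k].
  rewrite esym_cons !esym0 mulr1 mul1r /= big_nat_recl //=.
  have := IH 0%N h0'; rewrite esym0 mul1r; lra.
rewrite !esym_cons /= big_add1 /=.
have I1 := IH k h0'. have I2 := IH k.+1 h0'.
have hS : \sum_(k.+1 <= i < size xs) xs`_i <= \sum_(k <= i < size xs) xs`_i.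
  case: (ltnP k (size xs)) => hk.
    by rewrite (big_ltn hk) lerDr.
  by rewrite !big_geq // leqW.
have e1 : 0 <= esym_seq k.+1 xs by apply: esym_ge0.
have h3 := ler_wpM2l e1 hS.
have h4 := ler_wpM2l hx I1.
rewrite mulrDl; lra.
Qed.

End Esym.


Section Lam.
Variables (R : realFieldType) (m r : nat) (sigma : nat -> R).
Hypothesis hrm : (r <= m)%N.
Hypothesis hpos : forall i, (i < r)%N -> 0 < sigma i.
Hypothesis hmon : forall i j, (i <= j)%N -> (j < r)%N -> sigma j <= sigma i.

Let lam := lambda_vec m r sigma.

Lemma lamE j : lam`_j = if (j < r)%N then sigma j ^+ 2 else 0.
Proof.
rewrite /lam /lambda_vec; case: (ltnP j m) => hj.
  by rewrite (nth_map 0%N) ?size_iota // nth_iota.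
rewrite nth_default ?size_map ?size_iota //.
by case: ifP => // h; move: (leq_trans h hrm); rewrite ltnNge hj.
Qed.

Lemma lam_size : size lam = m.
Proof. by rewrite /lam /lambda_vec size_map size_iota. Qed.

Lemma lam_ge0 j : 0 <= lam`_j.
Proof. by rewrite lamE; case: ifP => _ //; exact: sqr_ge0. Qed.

Lemma muE i j : (i < m)%N ->
  (remove_entry i lam)`_j = if (j < i)%N then lam`_j else lam`_j.+1.
Proof.
move=> hi; rewrite /remove_entry nth_cat.
have hs : size (take i lam) = i by apply: size_takel; rewrite lam_size; exact: ltnW.
rewrite hs; case: ifP => hji; first by rewrite nth_take.
rewrite nth_drop; congr (nth _ _ _).
move/negbT: hji; rewrite -leqNgt; lia.
Qed.

Lemma mu_size i : (i < m)%N -> size (remove_entry i lam) = m.-1.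
Proof.
move=> hi; rewrite /remove_entry size_cat size_drop.
have hs : size (take i lam) = i by apply: size_takel; rewrite lam_size; exact: ltnW.
rewrite hs lam_size; lia.
Qed.

Lemma mu_ge0 i j : (i < m)%N -> 0 <= (remove_entry i lam)`_j.
Proof. by move=> hi; rewrite muE //; case: ifP => _; exact: lam_ge0. Qed.

Lemma lam_perm i : (i < m)%N -> perm_eq lam (lam`_i :: remove_entry i lam).
Proof.
move=> hi; rewrite /remove_entry.
rewrite -{1}(cat_take_drop i lam) (drop_nth 0) ?lam_size //.
by rewrite -cat1s perm_catCA.
Qed.

Lemma es_pos s : (s <= r)%N -> 0 < esym_seq s lam.
Proof.
move=> hs; apply: esym_gt0; first exact: lam_ge0.
move=> j hj; rewrite lamE (leq_trans hj hs).
by apply: exprn_gt0; apply: hpos; exact: leq_trans hj hs.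
Qed.

Lemma key_ineq s' i : (s'.+1 <= r)%N -> (i < r)%N ->
  sigma r.-1 ^+ 2 / (\sum_(s' <= j < r) sigma j ^+ 2) <=
  (esym_seq s'.+1 lam)^-1 * (lam`_i * esym_seq s' (remove_entry i lam)).
Proof.
move=> hsr hir.
have him : (i < m)%N := leq_trans hir hrm.
have hr1 : r = r.-1.+1 by rewrite prednK // (leq_trans _ hsr).
set mu := remove_entry i lam.
have hperm := lam_perm i him.
have he : esym_seq s'.+1 lam = lam`_i * esym_seq s' mu + esym_seq s'.+1 mu.
  by rewrite (esym_perm _ _ _ _ hperm) esym_cons.
have hb := @esym_tail _ mu s' (fun j => mu_ge0 i j him).
rewrite -/mu (mu_size i him) in hb.
have hsum : \sum_(s' <= j < m.-1) mu`_j <= \sum_(s' <= j < r.-1) sigma j ^+ 2.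
  rewrite (big_cat_nat _ (n:=r.-1)) /=; last 2 first.
  - by rewrite -ltnS -hr1.
  - by rewrite -ltnS -hr1 prednK // (leq_trans _ hrm) // (leq_trans _ hsr).
  have -> : \sum_(r.-1 <= j < m.-1) mu`_j = 0.
    rewrite big_nat_cond big1 // => j /andP[/andP[hj1 hj2] _].
    have h1 : (j < i)%N = false by apply/negbTE; rewrite -leqNgt; lia.
    rewrite /mu muE // h1 lamE.
    have h2 : (j.+1 < r)%N = false by apply/negbTE; rewrite -leqNgt; lia.
    by rewrite h2.
  rewrite addr0; apply: ler_sum_nat => j /andP[hj1 hj2].
  have hjr : (j < r)%N by lia.
  have hj1r : (j.+1 < r)%N by lia.
  rewrite /mu muE //; case: ifP => hji; rewrite !lamE ?hjr ?hj1r //.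
  have h1 := hmon _ _ (leqnSn j) hj1r.
  have h2 := ltW (hpos _ hj1r).
  by rewrite ler_sqr // ?nnegrE // ltW // hpos.
have hT : \sum_(s' <= j < r) sigma j ^+ 2 =
    \sum_(s' <= j < r.-1) sigma j ^+ 2 + sigma r.-1 ^+ 2.
  by rewrite -big_nat_recr -?hr1 //; lia.
have ha : 0 <= esym_seq s' mu by apply: esym_ge0 => j; exact: mu_ge0 i j him.
have hT0 : 0 <= \sum_(s' <= j < r.-1) sigma j ^+ 2.
  by apply: sumr_ge0 => j _; exact: sqr_ge0.
have hx : 0 < sigma r.-1 ^+ 2 by apply: exprn_gt0; apply: hpos; lia.
have hL : lam`_i = sigma i ^+ 2 by rewrite lamE hir.
have hxL : sigma r.-1 ^+ 2 <= lam`_i.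
  have hir1 : (r.-1 < r)%N by lia.
  have hle : sigma r.-1 <= sigma i by apply: hmon => //; lia.
  have := ltW (hpos _ hir1).
  rewrite hL !expr2; nra.
have hE := es_pos s'.+1 hsr.
rewrite hT ler_pdivrMr; last by lra.
rewrite -mulrA ler_pdivlMl // he.
move: hT0 hx hxL ha hb hsum he hE.
set T' := \sum_(s' <= j < r.-1) sigma j ^+ 2.
set S' := \sum_(s' <= j < m.-1) mu`_j.
set x := sigma r.-1 ^+ 2.
set L := lam`_i.
set a := esym_seq s' mu.
set b := esym_seq s'.+1 mu.
move=> hT0 hx hxL ha hb hsum _ _.
have h1 : b <= a * T' by apply: (le_trans hb); exact: ler_wpM2l.
have h2 : b * x <= a * T' * x by apply: ler_wpM2r => //; exact: ltW.
have h3 : a * T' * x <= a * T' * L by apply: ler_wpM2l => //; exact: mulr_ge0.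
nra.
Qed.
End Lam.


Lemma rank_facts (R : realFieldType) (m n : nat) (A : 'M[R]_(m, n))
    (U : 'M[R]_m) (V : 'M[R]_n) (sigma : nat -> R) (r : nat) :
    U^T *m U = 1%:M -> V^T *m V = 1%:M ->
    (forall i, (i < minn m n)%N -> 0 <= sigma i) ->
    (forall i j, (i <= j)%N -> (j < minn m n)%N -> sigma j <= sigma i) ->
    A = U *m svd_diag m n sigma *m V^T ->
    \rank A = r ->
    [/\ (r <= minn m n)%N, (forall i, (i < r)%N -> 0 < sigma i) &
        (forall i, (r <= i)%N -> (i < minn m n)%N -> sigma i = 0)].
Proof.
move=> hUU hVV hs0 hsmon hA hr.
set p := minn m n.
have exP : exists j, (p <= j)%N || (sigma j == 0) by exists p; rewrite leqnn.
case: (ex_minnP exP) => k Pk mink.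
have hkp : (k <= p)%N by apply: mink; rewrite leqnn.
have hnz : forall i, (i < k)%N -> sigma i != 0 /\ (i < p)%N.
  move=> i hi.
  have : ~~ ((p <= i)%N || (sigma i == 0)).
    by apply/negP => /mink; rewrite leqNgt hi.
  by rewrite negb_or -ltnNge => /andP[-> ->].
have hz0 : forall i, (k <= i)%N -> (i < p)%N -> sigma i = 0.
  move=> i hki hip.
  have hkp' : (k < p)%N := leq_ltn_trans hki hip.
  move: Pk; rewrite leqNgt hkp' /= => /eqP sk.
  apply: le_anti; rewrite hs0 // andbT -sk; exact: hsmon.
have hkm : (k <= m)%N by move: hkp; rewrite leq_min => /andP[].
have hkn : (k <= n)%N by move: hkp; rewrite leq_min => /andP[].
have hSk : svd_diag m n sigma =
    diag_mx (\row_(i < m) if (i < k)%N then sigma i else 1) *m pid_mx k.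
  apply/matrixP => i j; rewrite mul_diag_mx /svd_diag /pid_mx !mxE.
  case: eqP => hij /=; last by rewrite mulr0.
  case: ifP => hik; rewrite ?mulr1 ?mulr0 //.
  apply: hz0; first by rewrite leqNgt hik.
  by rewrite leq_min ltn_ord hij ltn_ord.
have hD : diag_mx (\row_(i < m) if (i < k)%N then sigma i else 1) \in unitmx.
  rewrite unitmxE det_diag unitfE; apply/prodf_neq0 => i _; rewrite mxE.
  by case: ifP => h; [exact: (hnz i h).1 | exact: oner_neq0].
have rankS : \rank (svd_diag m n sigma) = k.
  rewrite hSk -mxrank_tr trmx_mul mxrankMfree ?row_free_unit ?unitmx_tr //.
  by rewrite mxrank_tr rank_pid_mx.
have hU : U \in unitmx by case: (mulmx1_unit hUU).
have hV : V^T \in unitmx by case: (mulmx1_unit hVV).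
have rankA : \rank A = k.
  rewrite hA mxrankMfree ?row_free_unit //.
  by rewrite -mxrank_tr trmx_mul mxrankMfree ?row_free_unit ?unitmx_tr // mxrank_tr.
have hkr : k = r by rewrite -hr rankA.
rewrite -hkr; split.
- exact: hkp.
- move=> i hi; have [h1 h2] := hnz i hi.
  by rewrite lt_def h1 hs0.
- move=> i h1 h2; exact: hz0.
Qed.


Lemma qf (R : comPzRingType) m (g : 'rV[R]_m) (u : 'cV[R]_m) :
  (u^T *m diag_mx g *m u) 0 0 = \sum_i g 0 i * u i 0 ^+ 2.
Proof.
rewrite mul_mx_diag mxE; apply: eq_bigr => i _; rewrite !mxE expr2.
by rewrite [u i 0 * _]mulrC -mulrA.
Qed.

Theorem lemma2p3 (R : realFieldType) (m n : nat) (A : 'M[R]_(m, n))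
    (U : 'M[R]_m) (V : 'M[R]_n) (sigma : nat -> R) (r s : nat) :
    U^T *m U = 1%:M -> U *m U^T = 1%:M ->
    V^T *m V = 1%:M -> V *m V^T = 1%:M ->
    (forall i, (i < minn m n)%N -> 0 <= sigma i) ->
    (forall i j, (i <= j)%N -> (j < minn m n)%N -> sigma j <= sigma i) ->
    A = U *m svd_diag m n sigma *m V^T ->
    \rank A = r ->
    (1 <= s)%N -> (s <= r)%N ->
    forall z : 'cV[R]_n, (exists y : 'cV[R]_m, z = A^T *m y) ->
      (z^T *m A^T *m @H_mat R m r s sigma U *m A *m z) 0 0 >=
        sigma r.-1 ^+ 2 / (\sum_(s.-1 <= j < r) sigma j ^+ 2)
        * \sum_(i < n) z i 0 ^+ 2.
Proof.
move=> hUU hUU' hVV hVV' hs0 hsmon hA hr hs1 hsr z [y hz].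
have [hrp hpos hzero] := @rank_facts R m n A U V sigma r hUU hVV hs0 hsmon hA hr.
have hrm : (r <= m)%N by move: hrp; rewrite leq_min => /andP[].
have hmon : forall i j, (i <= j)%N -> (j < r)%N -> sigma j <= sigma i.
  by move=> i j hij hj; apply: hsmon => //; exact: leq_trans hj hrp.
case: s hs1 hsr => [//|s'] _ hsr.
set S := svd_diag m n sigma.
set lam := lambda_vec m r sigma.
set arow := \row_(i < m) (if (i < n)%N then sigma i ^+ 2 else 0 : R).
have hSE : forall (i : 'I_m) (j : 'I_n), S i j = if (i == j :> nat) then sigma i else 0.
  by move=> i j; rewrite /S /svd_diag mxE.
have hG : S *m S^T = diag_mx arow.
  apply/matrixP => i k; rewrite !mxE.
  case: (eqVneq i k) => [<-|hik].
    rewrite mulr1n; case: (ltnP i n) => hin.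
      rewrite (bigD1 (Ordinal hin)) //= big1 ?addr0 => [|j hj].
        by rewrite !mxE eqxx expr2.
      rewrite !mxE; case: eqP => hij; last by rewrite mul0r.
      by exfalso; move/eqP: hj; apply; apply: val_inj => /=; rewrite hij.
    apply: big1 => j _; rewrite !mxE.
    case: eqP => hij; last by rewrite mul0r.
    by move: (ltn_ord j); rewrite -hij ltnNge hin.
  rewrite mulr0n; apply: big1 => j _; rewrite !mxE.
  case: eqP => hij; case: eqP => hkj; rewrite ?mul0r ?mulr0 //.
  by move/eqP: hik; case; apply: val_inj; rewrite /= hij hkj.
set u := U^T *m y.
have hAT : A^T = V *m S^T *m U^T by rewrite hA !trmx_mul trmxK mulmxA.
have hz' : z = V *m (S^T *m u) by rewrite hz hAT /u !mulmxA.
clearbody u.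
have hAz : A *m z = U *m (diag_mx arow *m u).
  by rewrite hA hz' -hG !mulmxA -(mulmxA _ V^T V) hVV mulmx1.
have hzA : z^T *m A^T = u^T *m diag_mx arow *m U^T.
  by rewrite -trmx_mul hAz !trmx_mul tr_diag_mx.
have hform : z^T *m A^T *m H_mat r s'.+1 sigma U *m A *m z =
   (esym_seq s'.+1 lam)^-1 *: (u^T *m (diag_mx arow *m
      diag_mx (\row_(i < m) esym_seq s' (remove_entry i lam)) *m diag_mx arow) *m u).
  have -> : z^T *m A^T *m H_mat r s'.+1 sigma U *m A *m z =
      (z^T *m A^T) *m H_mat r s'.+1 sigma U *m (A *m z) by rewrite !mulmxA.
  rewrite hzA hAz /H_mat -/lam -scalemxAr -scalemxAl; congr (_ *: _).
  have hcan : forall k (X : 'M[R]_(k, m)), X *m U^T *m U = X.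
    by move=> k X; rewrite -mulmxA hUU mulmx1.
  by rewrite !mulmxA !hcan.
have hnorm : \sum_(i < n) z i 0 ^+ 2 = (u^T *m diag_mx arow *m u) 0 0.
  have -> : u^T *m diag_mx arow *m u = z^T *m z.
    by rewrite hz' !trmx_mul trmxK -hG !mulmxA -(mulmxA _ V^T V) hVV mulmx1.
  by rewrite mxE; apply: eq_bigr => i _; rewrite mxE expr2.
rewrite hform hnorm !mulmx_diag qf [X in _ <= X]mxE qf mulr_sumr mulr_sumr.
apply: ler_sum => i _; rewrite !mxE.
case: (ltnP i n) => hin; last by rewrite !mul0r !mulr0.
case: (ltnP i r) => hir; last first.
  rewrite (hzero i) //; last by rewrite leq_min (ltn_ord i) hin.
  by rewrite expr0n /= !mul0r !mulr0.
have hk := @key_ineq R m r sigma hrm hpos hmon s' i hsr hir.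
rewrite /= in hk.
have hL : lam`_i = sigma i ^+ 2 by rewrite (@lamE R m r sigma hrm) hir.
rewrite -/lam hL in hk.
have hu : 0 <= sigma i ^+ 2 * u i 0 ^+ 2 by apply: mulr_ge0; exact: sqr_ge0.
have := ler_wpM2r hu hk.
set c := (esym_seq s'.+1 lam)^-1.
set D := esym_seq s' (remove_entry i lam).
move=> h; apply: (le_trans h).
set a := sigma i ^+ 2. set w := u i 0 ^+ 2.
have -> : c * (a * D) * (a * w) = c * (a * D * a * w) by ring.
exact: lexx.
Qed.
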